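(* Fix a coordinate $i$ and run the COCOB algorithm (defined in the context) on an arbitrary sequence of outcomes with $|g_{t,i}|\le L_i$ for all $t$. Define the wealth $\mathrm{Wealth}_{t,i}=L_i+\mathrm{Reward}_{t,i}$. Then for every $t\ge0$: (a) $\mathrm{Wealth}_{t,i}>0$, and $|\beta_{t,i}g_{t+1,i}|<1$; (b) $\mathrm{Wealth}_{t,i}\ \ge\ L_i\exp\left(\frac{\theta_{t,i}^2}{2L_i(G_{t,i}+L_i)}-\sum_{j=1}^{t}\frac{|g_{j,i}|}{2(L_i+G_{j-1,i})}\right)\ \ge\ L_i\exp\left(\frac{\theta_{t,i}^2}{2L_i(G_{t,i}+L_i)}-\frac12\ln\frac{G_{t,i}}{L_i}\right)$.
   Context: COCOB algorithm (COntinuous COin Betting). Input: constants $L_i>0$ for $i=1,\dots,d$, an initial point $\boldsymbol{w}_1\in\mathbb{R}^d$, and a number of rounds $T$. Initialize $G_{0,i}=L_i$, $\mathrm{Reward}_{0,i}=0$ and $\theta_{0,i}=0$ for every $i$. For $t=1,\dots,T$: a vector $\boldsymbol{g}_t\in\mathbb{R}^d$ is received at the current point $\boldsymbol{w}_t$; it may depend arbitrarily on $\boldsymbol{w}_1,\dots,\boldsymbol{w}_t$. Then for each $i=1,\dots,d$: - $G_{t,i}=G_{t-1,i}+|g_{t,i}|$; - $\mathrm{Reward}_{t,i}=\mathrm{Reward}_{t-1,i}+(w_{t,i}-w_{1,i})g_{t,i}$; - $\theta_{t,i}=\theta_{t-1,i}+g_{t,i}$; - $\beta_{t,i}=\frac{1}{L_i}\left(2\sigma\left(\frac{2\theta_{t,i}}{G_{t,i}+L_i}\right)-1\right)$,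 where $\sigma(x)=\frac{1}{1+e^{-x}}$; - $w_{t+1,i}=w_{1,i}+\beta_{t,i}(L_i+\mathrm{Reward}_{t,i})$. In particular $w_{t+1,i}-w_{1,i}=\beta_{t,i}\mathrm{Wealth}_{t,i}$, so that $\mathrm{Wealth}_{t+1,i}=\mathrm{Wealth}_{t,i}(1+\beta_{t,i}g_{t+1,i})$. *)

(* Defs.v *)
From Stdlib Require Import Reals Lra.
Open Scope R_scope.

Definition sigmoid (x : R) : R := 1 / (1 + exp (- x)).

(* Per-coordinate COCOB.  Everything below is for one coordinate i, with
   Li = L_i, w1i = w_{1,i} and gi t = g_{t,i} (t >= 1; gi 0 is never used).
   The coordinates of COCOB evolve independently. *)

Definition cocob_beta (Li G theta : R) : R :=
  (1 / Li) * (2 * sigmoid (2 * theta / (G + Li)) - 1).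

(* state at time t: (G_{t,i}, Reward_{t,i}, theta_{t,i}) *)
Fixpoint cocob_state (Li w1i : R) (gi : nat -> R) (t : nat) : R * R * R :=
  match t with
  | O => (Li, 0, 0)
  | S t' =>
      let '(G, Rw, th) := cocob_state Li w1i gi t' in
      (* w_{t,i} with t = t'+1 : w_1 = w1i, and for t' >= 1
         w_{t'+1} = w1 + beta_{t'} (Li + Reward_{t'}) *)
      let wt := match t' with
                | O => w1i
                | S _ => w1i + cocob_beta Li G th * (Li + Rw)
                end in
      (G + Rabs (gi t), Rw + (wt - w1i) * gi t, th + gi t)
  end.

Definition cocob_G (Li w1i : R) (gi : nat -> R) (t : nat) : R :=
  fst (fst (cocob_state Li w1i gi t)).
Definition cocob_Reward (Li w1i : R) (gi : nat -> R) (t : nat) : R :=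
  snd (fst (cocob_state Li w1i gi t)).
Definition cocob_theta (Li w1i : R) (gi : nat -> R) (t : nat) : R :=
  snd (cocob_state Li w1i gi t).

(* beta_{t,i} (the formula evaluated at time t; for t = 0 it gives 0) *)
Definition cocob_beta_t (Li w1i : R) (gi : nat -> R) (t : nat) : R :=
  cocob_beta Li (cocob_G Li w1i gi t) (cocob_theta Li w1i gi t).

Definition cocob_Wealth (Li w1i : R) (gi : nat -> R) (t : nat) : R :=
  Li + cocob_Reward Li w1i gi t.

Fixpoint sum_1_to (f : nat -> R) (t : nat) : R :=
  match t with
  | O => 0
  | S t' => sum_1_to f t' + f (S t')
  end.

(* Main.v *)
Require Import Defs.
From Stdlib Require Import Reals Lra Psatz.
From Coquelicot Require Import Coquelicot.
Open Scope R_scope.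

Definition mfun (y : R) : R := y - (exp y - exp (- y)) / (exp y + exp (- y)).
Definition kfun (y : R) : R := y ^ 2 / 2 - ln ((exp y + exp (- y)) / 2).

Lemma S_pos y : 0 < exp y + exp (- y).
Proof. pose proof (exp_pos y); pose proof (exp_pos (-y)); lra. Qed.

Lemma mfun_der y : is_derive mfun y
  ((exp y - exp (- y)) ^ 2 / (exp y + exp (- y)) ^ 2).
Proof.
  pose proof (S_pos y).
  unfold mfun. auto_derive. { lra. }
  field. lra.
Qed.

Lemma kfun_der y : is_derive kfun y (mfun y).
Proof.
  pose proof (S_pos y).
  unfold kfun, mfun. auto_derive. { lra. }
  field. lra.
Qed.

Lemma cont_of_der (f : R -> R) (y l : R) : is_derive f y l -> continuity_pt f y.
Proof.
  intros H. apply continuity_pt_filterlim.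
  apply (ex_derive_continuous (V:=R_CompleteNormedModule)). exists l; exact H.
Qed.

Lemma mfun_sign y : (0 <= y -> 0 <= mfun y) /\ (y <= 0 -> mfun y <= 0).
Proof.
  destruct (MVT_gen mfun 0 y (fun y => (exp y - exp (- y)) ^ 2 / (exp y + exp (- y)) ^ 2))
    as [c [Hc E]].
  - intros; apply mfun_der.
  - intros; eapply cont_of_der; apply mfun_der.
  - assert (m0 : mfun 0 = 0).
    { unfold mfun. rewrite Ropp_0. unfold Rminus. rewrite Rplus_opp_r. unfold Rdiv. rewrite Rmult_0_l. ring. }
    rewrite m0 in E.
    assert (0 <= (exp c - exp (- c)) ^ 2 / (exp c + exp (- c)) ^ 2).
    { pose proof (S_pos c). apply Rmult_le_pos. apply pow2_ge_0.
      apply Rlt_le, Rinv_0_lt_compat. apply pow_lt; lra. }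
    split; intros; nra.
Qed.

Lemma kfun_nonneg y : 0 <= kfun y.
Proof.
  destruct (MVT_gen kfun 0 y mfun) as [c [Hc E]].
  - intros; apply kfun_der.
  - intros; eapply cont_of_der; apply kfun_der.
  - assert (k0 : kfun 0 = 0).
    { unfold kfun. rewrite Ropp_0, exp_0.
      replace ((1+1)/2) with 1 by field. rewrite ln_1. field. }
    rewrite k0 in E.
    destruct (Rle_dec 0 y).
    + rewrite Rmin_left, Rmax_right in Hc by lra.
      destruct (mfun_sign c) as [H1 _]. nra.
    + rewrite Rmin_right, Rmax_left in Hc by lra.
      destruct (mfun_sign c) as [_ H1]. nra.
Qed.

Lemma cosh_bound y : exp y + exp (- y) <= 2 * exp (y ^ 2 / 2).
Proof.
  pose proof (kfun_nonneg y). unfold kfun in H. pose proof (S_pos y).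
  assert (ln ((exp y + exp (- y)) / 2) <= y ^ 2 / 2) by lra.
  assert (exp (ln ((exp y + exp (- y)) / 2)) <= exp (y ^ 2 / 2)).
  { destruct H1 as [H1|H1]. left; apply exp_increasing; exact H1. rewrite H1; lra. }
  rewrite exp_ln in H2 by lra. lra.
Qed.

Lemma exp_convex u x : 0 <= u <= 1 -> exp (u * x) <= 1 - u + u * exp x.
Proof.
  intros Hu.
  pose proof (exp_ineq1_le ((1 - u) * x)).
  pose proof (exp_ineq1_le (- (u * x))).
  assert (E1 : exp x = exp (u * x) * exp ((1 - u) * x)).
  { rewrite <- exp_plus. f_equal; ring. }
  assert (E2 : 1 = exp (u * x) * exp (- (u * x))).
  { rewrite <- exp_plus. replace (u * x + - (u * x)) with 0 by ring. now rewrite exp_0. }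
  pose proof (exp_pos (u * x)).
  assert (exp (u*x) * (1 + (1 - u) * x) <= exp x) by (rewrite E1; apply Rmult_le_compat_l; lra).
  assert (exp (u*x) * (1 + - (u * x)) <= 1) by (rewrite E2 at 2; apply Rmult_le_compat_l; lra).
  nra.
Qed.

Lemma ln_bernoulli u z : 0 <= u <= 1 -> 0 < z -> u * ln z <= ln (1 + u * (z - 1)).
Proof.
  intros Hu Hz.
  pose proof (exp_convex u (ln z) Hu). rewrite exp_ln in H by lra.
  assert (0 < 1 + u * (z - 1)) by nra.
  rewrite <- (ln_exp (u * ln z)). apply ln_le. apply exp_pos. lra.
Qed.

Lemma ln_le' x y : 0 < x -> x <= y -> ln x <= ln y.
Proof. intros Hx [H|H]. left; apply ln_increasing; auto. rewrite H; lra. Qed.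

Definition Tf (y : R) : R := 2 * sigmoid (2 * y) - 1.

Lemma Tf_eq y : Tf y = 2 / (1 + exp (- (2 * y))) - 1.
Proof. unfold Tf, sigmoid. field. pose proof (exp_pos (-(2*y))); lra. Qed.

Lemma Tf_odd y : Tf (- y) = - Tf y.
Proof.
  rewrite !Tf_eq. replace (- (2 * - y)) with (- (- (2 * y))) by ring.
  rewrite exp_Ropp. pose proof (exp_pos (-(2*y))). field. split; lra.
Qed.

Lemma Tf_bound y : -1 < Tf y < 1.
Proof. rewrite Tf_eq. pose proof (exp_pos (-(2*y))).
  set (e := exp (- (2 * y))) in *.
  assert (Hx : 2 / (1 + e) * (1 + e) = 2) by (field; lra).
  assert (0 < 2 / (1 + e)) by (apply Rdiv_lt_0_compat; lra).
  nra.
Qed.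

Lemma Tf_ln y : y - y ^ 2 / 2 <= ln (1 + Tf y).
Proof.
  pose proof (cosh_bound y).
  rewrite Tf_eq. pose proof (exp_pos (-(2*y))).
  set (e := exp (- (2 * y))) in *.
  assert (He : e = exp (- y) * exp (- y)) by (unfold e; rewrite <- exp_plus; f_equal; ring).
  assert (Hyy : exp y * exp (- y) = 1) by (rewrite <- exp_plus; replace (y + - y) with 0 by ring; apply exp_0).
  assert (Hq : exp (y - y^2/2) * exp (y^2/2) = exp y) by (rewrite <- exp_plus; f_equal; ring).
  assert (H1 : 1 + e <= 2 * exp (y^2/2) * exp (- y)).
  { rewrite He. pose proof (exp_pos (-y)). nra. }
  assert (H2 : exp (y - y^2/2) <= 2 / (1 + e)).
  { apply (Rmult_le_reg_r (1 + e)). lra.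
    replace (2 / (1 + e) * (1 + e)) with 2 by (field; lra).
    pose proof (exp_pos (y - y^2/2)). pose proof (exp_pos (-y)).
    nra. }
  replace (1 + (2 / (1 + e) - 1)) with (2 / (1 + e)) by ring.
  rewrite <- (ln_exp (y - y^2/2)). apply ln_le'. apply exp_pos. exact H2.
Qed.

Lemma step_pos L G th g : 0 < L -> 0 < G -> 0 <= g <= L ->
  (th+g)^2/(2*L*(G+g)) - th^2/(2*L*G) - g/(2*(L+G))
  <= ln (1 + (1/L) * Tf (th/(G+L)) * g).
Proof.
  intros HL HG Hg.
  set (y := th/(G+L)). set (u := g/L).
  assert (Hu : 0 <= u <= 1).
  { unfold u; split. apply Rmult_le_pos; [lra| apply Rlt_le, Rinv_0_lt_compat; lra].
    apply (Rmult_le_reg_r L); auto. unfold Rdiv; rewrite Rmult_assoc, Rinv_l; lra. }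
  pose proof (Tf_bound y).
  pose proof (ln_bernoulli u (1 + Tf y) Hu ltac:(lra)).
  replace (1 + (1/L) * Tf y * g) with (1 + u * ((1 + Tf y) - 1)) by (unfold u; field; lra).
  pose proof (Tf_ln y).
  assert (u * (y - y^2/2) <= u * ln (1 + Tf y)) by (apply Rmult_le_compat_l; lra).
  assert (Hid : u * (y - y^2/2) - ((th+g)^2/(2*L*(G+g)) - th^2/(2*L*G) - g/(2*(L+G)))
     = g * th^2 / (2*G*(G+L)^2) + g*(L-g)*(th-G)^2/(2*L*G*(G+L)*(G+g))).
  { unfold u, y. field. lra. }
  assert (0 <= g * th^2 / (2*G*(G+L)^2)).
  { apply Rmult_le_pos. apply Rmult_le_pos; [lra|apply pow2_ge_0].
    apply Rlt_le, Rinv_0_lt_compat. apply Rmult_lt_0_compat; [lra| apply pow_lt; lra]. }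
  assert (0 <= g*(L-g)*(th-G)^2/(2*L*G*(G+L)*(G+g))).
  { apply Rmult_le_pos. apply Rmult_le_pos; [apply Rmult_le_pos; lra|apply pow2_ge_0].
    apply Rlt_le, Rinv_0_lt_compat. repeat apply Rmult_lt_0_compat; lra. }
  lra.
Qed.

Lemma step_gen L G th g : 0 < L -> 0 < G -> Rabs g <= L ->
  (th+g)^2/(2*L*(G+Rabs g)) - th^2/(2*L*G) - Rabs g/(2*(L+G))
  <= ln (1 + (1/L) * Tf (th/(G+L)) * g).
Proof.
  intros HL HG Hg.
  destruct (Rle_dec 0 g).
  - rewrite Rabs_right in * by lra. apply step_pos; lra.
  - rewrite Rabs_left in * by lra.
    pose proof (step_pos L G (-th) (-g) HL HG ltac:(lra)).
    replace ((-th)/(G+L)) with (- (th/(G+L))) in H by (field; lra).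
    rewrite Tf_odd in H.
    replace ((th+g)^2) with ((-th + -g)^2) by ring.
    replace (th^2) with ((-th)^2) by ring.
    replace ((1/L) * Tf (th/(G+L)) * g) with ((1/L) * - Tf (th/(G+L)) * - g) by ring.
    exact H.
Qed.

Section Main.
Variables (Li w1i : R) (gi : nat -> R).
Hypothesis HL : 0 < Li.
Hypothesis hg : forall t, (1 <= t)%nat -> Rabs (gi t) <= Li.

Notation G := (cocob_G Li w1i gi).
Notation TH := (cocob_theta Li w1i gi).
Notation RW := (cocob_Reward Li w1i gi).
Notation W := (cocob_Wealth Li w1i gi).
Notation BT := (cocob_beta_t Li w1i gi).

Lemma G_0 : G 0 = Li. Proof. reflexivity. Qed.
Lemma TH_0 : TH 0 = 0. Proof. reflexivity. Qed.
Lemma RW_0 : RW 0 = 0. Proof. reflexivity. Qed.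

Lemma G_S t : G (S t) = G t + Rabs (gi (S t)).
Proof. unfold cocob_G. simpl (cocob_state _ _ _ (S t)).
  destruct (cocob_state Li w1i gi t) as [[a b] c]. reflexivity. Qed.

Lemma TH_S t : TH (S t) = TH t + gi (S t).
Proof. unfold cocob_theta. simpl (cocob_state _ _ _ (S t)).
  destruct (cocob_state Li w1i gi t) as [[a b] c]. reflexivity. Qed.

Lemma RW_S t : RW (S t) = RW t + BT t * (Li + RW t) * gi (S t).
Proof. unfold cocob_Reward, cocob_beta_t, cocob_G, cocob_theta.
  simpl (cocob_state _ _ _ (S t)).
  destruct (cocob_state Li w1i gi t) as [[a b] c] eqn:E. simpl.
  destruct t.
  - simpl in E. injection E as <- <- <-. unfold cocob_beta, sigmoid.
    replace (- (2 * 0 / (Li + Li))) with 0 by (field; lra). rewrite exp_0. field. lra.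
  - ring.
Qed.

Lemma BT_eq t : BT t = (1/Li) * Tf (TH t / (G t + Li)).
Proof. unfold cocob_beta_t, cocob_beta, Tf. unfold Rdiv. rewrite !Rmult_assoc. reflexivity. Qed.

Definition Ssum t := sum_1_to (fun j => Rabs (gi j) / (2 * (Li + G (j - 1)%nat))) t.

Lemma Ssum_S t : Ssum (S t) = Ssum t + Rabs (gi (S t)) / (2 * (Li + G t)).
Proof. unfold Ssum. simpl sum_1_to at 1. rewrite Nat.sub_0_r. reflexivity. Qed.

Lemma W_S t : W (S t) = W t * (1 + BT t * gi (S t)).
Proof. unfold cocob_Wealth. rewrite RW_S. ring. Qed.

Lemma factor_bound t : Rabs (BT t * gi (S t)) < 1.
Proof.
  rewrite BT_eq. pose proof (Tf_bound (TH t / (G t + Li))).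
  pose proof (hg (S t) ltac:(lia)).
  rewrite !Rabs_mult. rewrite (Rabs_right (1/Li)) by (apply Rle_ge, Rlt_le, Rdiv_lt_0_compat; lra).
  assert (Rabs (Tf (TH t / (G t + Li))) < 1) by (apply Rabs_def1; lra).
  pose proof (Rabs_pos (Tf (TH t / (G t + Li)))). pose proof (Rabs_pos (gi (S t))).
  assert (Rabs (Tf (TH t / (G t + Li))) * Rabs (gi (S t)) < Li) by nra.
  replace (1 / Li * Rabs (Tf (TH t / (G t + Li))) * Rabs (gi (S t)))
    with ((Rabs (Tf (TH t / (G t + Li))) * Rabs (gi (S t))) / Li) by (field; lra).
  apply (Rmult_lt_reg_r Li); auto. unfold Rdiv. rewrite Rmult_assoc, Rinv_l by lra. lra.
Qed.

Lemma inv t : Li <= G t /\ 0 < W t /\ TH t ^ 2 / (2 * Li * G t) - Ssum t <= ln (W t / Li).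
Proof.
  induction t as [|t [IG [IW IP]]].
  - rewrite G_0, TH_0. unfold Ssum, cocob_Wealth. rewrite RW_0. simpl sum_1_to.
    replace ((Li + 0)/Li) with 1 by (field; lra). rewrite ln_1.
    split; [lra|split;[lra|]]. unfold Rdiv. rewrite pow_i by lia. lra.
  - pose proof (factor_bound t). apply Rabs_def2 in H.
    pose proof (hg (S t) ltac:(lia)).
    split; [rewrite G_S; pose proof (Rabs_pos (gi (S t))); lra|].
    rewrite W_S. split; [apply Rmult_lt_0_compat; lra|].
    replace (W t * (1 + BT t * gi (S t)) / Li) with ((W t / Li) * (1 + BT t * gi (S t))) by (field; lra).
    rewrite ln_mult by (try apply Rdiv_lt_0_compat; lra).
    pose proof (step_gen Li (G t) (TH t) (gi (S t)) HL ltac:(lra) H0).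
    rewrite <- BT_eq in H1.
    rewrite Ssum_S, G_S, TH_S.
    lra.
Qed.

Lemma ln_lb w : 0 < w -> ln w <= w - 1.
Proof. intros Hw. pose proof (exp_ineq1_le (ln w)). rewrite exp_ln in H by lra. lra. Qed.

Lemma ssum_bound t : Ssum t <= / 2 * ln (G t / Li).
Proof.
  induction t as [|t IH].
  - unfold Ssum. simpl. rewrite G_0. replace (Li/Li) with 1 by (field; lra). rewrite ln_1. lra.
  - destruct (inv t) as [IG _].
    pose proof (hg (S t) ltac:(lia)). pose proof (Rabs_pos (gi (S t))).
    rewrite Ssum_S, G_S.
    set (a := G t) in *. set (x := Rabs (gi (S t))) in *.
    replace ((a + x) / Li) with ((a / Li) * ((a + x) / a)) by (field; lra).
    rewrite ln_mult by (apply Rdiv_lt_0_compat; lra).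
    assert (E : ln ((a + x) / a) + ln (a / (a + x)) = 0).
    { rewrite <- ln_mult by (apply Rdiv_lt_0_compat; lra).
      replace ((a + x) / a * (a / (a + x))) with 1 by (field; lra). apply ln_1. }
    pose proof (ln_lb (a / (a + x)) ltac:(apply Rdiv_lt_0_compat; lra)).
    assert (x / (2 * (Li + a)) <= / 2 * (x / (a + x))).
    { replace (/ 2 * (x / (a + x))) with (x / (2 * (a + x))) by (field; lra).
      unfold Rdiv. apply Rmult_le_compat_l; auto. apply Rinv_le_contravar; lra. }
    replace (a / (a + x) - 1) with (- (x / (a + x))) in H1 by (field; lra).
    lra.
Qed.

Lemma exp_le' x y : x <= y -> exp x <= exp y.
Proof. intros [H|H]. left; apply exp_increasing; auto. rewrite H; lra. Qed.

Lemma main_gen t :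
    (0 < W t /\ Rabs (BT t * gi (S t)) < 1) /\
    (W t >= Li * exp (TH t ^ 2 / (2 * Li * (G t + Li))
                       - sum_1_to (fun j => Rabs (gi j) / (2 * (Li + G (j - 1)%nat))) t)
     /\ Li * exp (TH t ^ 2 / (2 * Li * (G t + Li))
                   - sum_1_to (fun j => Rabs (gi j) / (2 * (Li + G (j - 1)%nat))) t)
        >= Li * exp (TH t ^ 2 / (2 * Li * (G t + Li))
                      - / 2 * ln (G t / Li))).
Proof.
  destruct (inv t) as [IG [IW IP]].
  fold (Ssum t).
  split; [split; [exact IW| apply factor_bound]|split].
  - assert (TH t ^ 2 / (2 * Li * (G t + Li)) <= TH t ^ 2 / (2 * Li * G t)).
    { unfold Rdiv. apply Rmult_le_compat_l. apply pow2_ge_0.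
      apply Rinv_le_contravar. apply Rmult_lt_0_compat; lra.
      apply Rmult_le_compat_l; lra. }
    assert (exp (TH t ^ 2 / (2 * Li * (G t + Li)) - Ssum t) <= W t / Li).
    { rewrite <- (exp_ln (W t / Li)) by (apply Rdiv_lt_0_compat; lra).
      apply exp_le'. lra. }
    apply Rle_ge. apply (Rmult_le_compat_l Li) in H0; [|lra].
    replace (Li * (W t / Li)) with (W t) in H0 by (field; lra). exact H0.
  - apply Rle_ge. apply Rmult_le_compat_l; [lra|]. apply exp_le'.
    pose proof (ssum_bound t). lra.
Qed.
End Main.

Theorem mainTheorem3
  (d : nat) (L : nat -> R) (w1 : nat -> R) (g : nat -> nat -> R) (i : nat)
  (hL : forall k, (k < d)%nat -> 0 < L k)
  (hi : (i < d)%nat)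
  (hg : forall t, (1 <= t)%nat -> Rabs (g t i) <= L i) :
  let gi := fun t => g t i in
  let G := cocob_G (L i) (w1 i) gi in
  let theta := cocob_theta (L i) (w1 i) gi in
  let beta := cocob_beta_t (L i) (w1 i) gi in
  let W := cocob_Wealth (L i) (w1 i) gi in
  forall t : nat,
    (0 < W t /\ Rabs (beta t * gi (S t)) < 1) /\
    (W t >= L i * exp (theta t ^ 2 / (2 * L i * (G t + L i))
                       - sum_1_to (fun j => Rabs (gi j) / (2 * (L i + G (j - 1)%nat))) t)
     /\ L i * exp (theta t ^ 2 / (2 * L i * (G t + L i))
                   - sum_1_to (fun j => Rabs (gi j) / (2 * (L i + G (j - 1)%nat))) t)
        >= L i * exp (theta t ^ 2 / (2 * L i * (G t + L i))
                      - / 2 * ln (G t / L i))).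
Proof.
  intros gi G theta beta W t.
  exact (main_gen (L i) (w1 i) gi (hL i hi) hg t).
Qed.
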